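(* Let $(\mathfrak{g},[\cdot,\cdot]_{\mathfrak{g}},\phi_{\mathfrak{g}})$ be a finite-dimensional weakly involutive Hom-Lie algebra and $r\in\mathfrak g\otimes\mathfrak g$ with $\phi_{\mathfrak g}r^\sharp=r^\sharp\phi_{\mathfrak g}^*$. Let $[\cdot,\cdot]_{\mathfrak g^*}$ be defined by $\langle[a,b]_{\mathfrak g^*},x\rangle=\langle\Delta(x),a\otimes b\rangle$ where $\Delta(x)=(\mathrm{ad}_x\otimes\phi_{\mathfrak g}+\phi_{\mathfrak g}\otimes\mathrm{ad}_x)r$. Then for all $a,b\in\mathfrak g^*$, $[r^\sharp\phi_{\mathfrak g}^*(a),r^\sharp\phi_{\mathfrak g}^*(b)]_{\mathfrak g}-r^\sharp\phi_{\mathfrak g}^*[a,b]_{\mathfrak g^*}=[r,r]_{\mathfrak g}(a,b)$.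
   Context: A Hom-Lie algebra $(\mathfrak{g},[\cdot,\cdot]_{\mathfrak{g}},\phi_{\mathfrak{g}})$: skew-symmetric bilinear bracket and linear map with $\phi_{\mathfrak g}[x,y]=[\phi_{\mathfrak g}x,\phi_{\mathfrak g}y]$ and $[\phi_{\mathfrak g}(x),[y,z]]+[\phi_{\mathfrak g}(y),[z,x]]+[\phi_{\mathfrak g}(z),[x,y]]=0$; weakly involutive if $[\phi_{\mathfrak g}^2(x),y]=[x,y]$. $\mathrm{ad}_xy=[x,y]_{\mathfrak g}$. $r^\sharp:\mathfrak g^*\to\mathfrak g$, $\langle r^\sharp(a),b\rangle=\langle r,a\otimes b\rangle$. For $r=\sum_ix_i\otimes y_i$, $[r,r]_{\mathfrak g}=\sum_{i,j}\big([x_i,x_j]_{\mathfrak g}\otimes\phi_{\mathfrak g}(y_i)\otimes\phi_{\mathfrak g}(y_j)+\phi_{\mathfrak g}(x_i)\otimes[y_i,x_j]_{\mathfrak g}\otimes\phi_{\mathfrak g}(y_j)+\phi_{\mathfrak g}(x_i)\otimes\phi_{\mathfrak g}(x_j)\otimes[y_i,y_j]_{\mathfrak g}\big)\in\mathfrak g^{\otimes3}$, and $[r,r]_{\mathfrak g}(a,b)\in\mathfrak g$ is the element with $\langle[r,r]_{\mathfrak g}(a,b),c\rangle=\langle[r,r]_{\mathfrak g},a\otimes b\otimes c\rangle$ for all $c\in\mathfrak g^*$. *)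

(* Defs.v *)
(* A finite-dimensional vector space g over a field K is
   modelled as K^n = 'rV[K]_n; its dual g^* is also modelled as 'rV[K]_n
   with the canonical pairing <a, x> = \sum_i a_i x_i.
   Tensors in g (x) g are finite sums \sum_i x_i (x) y_i (sequences of pairs),
   tensors in g^{(x)3} finite sums of x (x) y (x) z (sequences of triples). *)
From HB Require Import structures.
From mathcomp Require Import all_boot all_order all_algebra.
Set Implicit Arguments. Unset Strict Implicit. Unset Printing Implicit Defensive.
Import Order.TTheory GRing.Theory Num.Theory.
Local Open Scope ring_scope.

Section Defs.
Variables (K : fieldType) (n : nat).
Notation vec := 'rV[K]_n.

Definition pair (a x : vec) : K := \sum_(i < n) a 0 i * x 0 i.

Definition evec (j : 'I_n) : vec := delta_mx 0 j.

Definition is_HomLie (br : vec -> vec -> vec) (phi : vec -> vec) : Prop :=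
  [/\ (forall (c : K) x y z, br (c *: x + y) z = c *: br x z + br y z),
      (forall (c : K) x y z, br x (c *: y + z) = c *: br x y + br x z),
      (forall x y, br x y = - br y x) &
      (forall (c : K) x y, phi (c *: x + y) = c *: phi x + phi y)] /\
  (forall x y, phi (br x y) = br (phi x) (phi y)) /\
  (forall x y z, br (phi x) (br y z) + br (phi y) (br z x)
                 + br (phi z) (br x y) = 0).

Definition weakly_involutive (br : vec -> vec -> vec) (phi : vec -> vec) : Prop :=
  forall x y, br (phi (phi x)) y = br x y.

(* dual map phi^* : g^* -> g^*, <phi^*(a), x> = <a, phi x> *)
Definition dualmap (phi : vec -> vec) (a : vec) : vec :=
  \row_j pair a (phi (evec j)).

Definition rsharp (r : seq (vec * vec)) (a : vec) : vec :=
  \sum_(p <- r) pair a p.1 *: p.2.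

(* [a,b]_{g^*} : <[a,b], x> = <Delta(x), a (x) b>,
   Delta(x) = (ad_x (x) phi + phi (x) ad_x) r *)
Definition Delta_pair (br : vec -> vec -> vec) (phi : vec -> vec)
    (r : seq (vec * vec)) (x a b : vec) : K :=
  \sum_(p <- r) (pair a (br x p.1) * pair b (phi p.2)
                 + pair a (phi p.1) * pair b (br x p.2)).

Definition dualbr (br : vec -> vec -> vec) (phi : vec -> vec)
    (r : seq (vec * vec)) (a b : vec) : vec :=
  \row_j Delta_pair br phi r (evec j) a b.

Definition rr (br : vec -> vec -> vec) (phi : vec -> vec)
    (r : seq (vec * vec)) : seq (vec * vec * vec) :=
  flatten [seq [:: (br p.1 q.1, phi p.2, phi q.2);
                   (phi p.1, br p.2 q.1, phi q.2);
                   (phi p.1, phi q.1, br p.2 q.2)] | p <- r, q <- r].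

Definition contr2 (T : seq (vec * vec * vec)) (a b : vec) : vec :=
  \sum_(t <- T) (pair a t.1.1 * pair b t.1.2) *: t.2.

End Defs.

(* Main.v *)
Require Import Defs.
From HB Require Import structures.
From mathcomp Require Import all_boot all_order all_algebra.
From mathcomp Require Import ring.
Import Order.TTheory GRing.Theory Num.Theory.
Local Open Scope ring_scope.

Lemma dbl0 (V : zmodType) (x : V) : x = x + x -> x = 0.
Proof. by move/(congr1 (fun t => t - x)); rewrite addrK subrr => ->. Qed.

Section Aux.
Variables (K : fieldType) (n : nat).
Notation vec := 'rV[K]_n.

Lemma pair_addr (a x y : vec) : pair a (x + y) = pair a x + pair a y.
Proof. by rewrite /pair -big_split; apply: eq_bigr => i _; rewrite mxE mulrDr. Qed.
Lemma pair_0r (a : vec) : pair a 0 = 0.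
Proof. by rewrite /pair big1 // => i _; rewrite mxE mulr0. Qed.
Lemma pair_scaler (a x : vec) k : pair a (k *: x) = k * pair a x.
Proof. by rewrite /pair mulr_sumr; apply: eq_bigr => i _; rewrite mxE mulrCA. Qed.
Lemma pair_oppr (a x : vec) : pair a (- x) = - pair a x.
Proof. by rewrite -scaleN1r pair_scaler mulN1r. Qed.

Lemma row_lin (g : vec -> K) :
  (forall k x y, g (k *: x + y) = k * g x + g y) ->
  forall z, pair (\row_j g (@evec K n j)) z = g z.
Proof.
move=> hg z.
have g0 : g 0 = 0.
  have := hg 1 0 0; rewrite scaler0 addr0 mul1r; exact: dbl0.
have gD : {morph g : x y / x + y}.
  by move=> x y; rewrite -[x in LHS]scale1r hg mul1r.
rewrite {2}(row_sum_delta z) (big_morph g gD g0) /pair.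
apply: eq_bigr => j _; rewrite mxE -[_ *: _]addr0 hg g0 addr0 mulrC.
by [].
Qed.

End Aux.

Theorem lemma4p9 (K : fieldType) (n : nat)
    (br : 'rV[K]_n -> 'rV[K]_n -> 'rV[K]_n) (phi : 'rV[K]_n -> 'rV[K]_n)
    (r : seq ('rV[K]_n * 'rV[K]_n)) :
  is_HomLie br phi -> weakly_involutive br phi ->
  (forall a, phi (rsharp r a) = rsharp r (dualmap phi a)) ->
  forall a b : 'rV[K]_n,
    br (rsharp r (dualmap phi a)) (rsharp r (dualmap phi b))
      - rsharp r (dualmap phi (dualbr br phi r a b))
    = contr2 (rr br phi r) a b.
Proof.
move=> [[brl brr brs phil] _] _ hr a b.
have phi0 : phi 0 = 0.
  have := phil 1 0 0; rewrite scaler0 addr0 scale1r; exact: dbl0.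
have phiD : {morph phi : x y / x + y}.
  by move=> x y; rewrite -[x in LHS]scale1r phil scale1r.
have phiZ : forall k x, phi (k *: x) = k *: phi x.
  by move=> k x; rewrite -[_ *: _]addr0 phil phi0 addr0.
have br0l : forall y, br 0 y = 0.
  move=> y; have := brl 1 0 0 y; rewrite scaler0 addr0 scale1r; exact: dbl0.
have br0r : forall x, br x 0 = 0.
  move=> x; have := brr 1 x 0 0; rewrite scaler0 addr0 scale1r; exact: dbl0.
have brDl : forall y, {morph br^~ y : x z / x + z}.
  by move=> y x z /=; rewrite -[x in LHS]scale1r brl scale1r.
have brDr : forall x, {morph br x : y z / y + z}.
  by move=> x y z /=; rewrite -[y in LHS]scale1r brr scale1r.
have brZl : forall k x y, br (k *: x) y = k *: br x y.
  by move=> k x y; rewrite -[_ *: _]addr0 brl br0l addr0.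
have brZr : forall k x y, br x (k *: y) = k *: br x y.
  by move=> k x y; rewrite -[_ *: _]addr0 brr br0r addr0.
have pair_dual : forall c z, pair (dualmap phi c) z = pair c (phi z).
  move=> c z; rewrite /dualmap (@row_lin _ _ (fun z => pair c (phi z))) // => k x y.
  by rewrite phil pair_addr pair_scaler.
have key : forall c, \sum_(q <- r) pair c (phi q.1) *: q.2
                     = \sum_(q <- r) pair c q.1 *: phi q.2.
  move=> c; under eq_bigr do rewrite -pair_dual.
  have := hr c; rewrite /rsharp (big_morph phi phiD phi0) => <-.
  by apply: eq_bigr => q _; rewrite phiZ.
have step1 : rsharp r (dualmap phi (dualbr br phi r a b))
    = \sum_(q <- r) Delta_pair br phi r q.1 a b *: phi q.2.
  rewrite /rsharp; under eq_bigr do rewrite pair_dual.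
  rewrite key; apply: eq_bigr => q _; rewrite /dualbr (@row_lin _ _ (fun x => Delta_pair br phi r x a b)) //.
  move=> k x y; rewrite /Delta_pair mulr_sumr -big_split /=.
  apply: eq_bigr => p _.
  rewrite brl brl !pair_addr !pair_scaler; ring.
have -> : contr2 (rr br phi r) a b =
   \sum_(p <- r) \sum_(q <- r)
     ((pair a (br p.1 q.1) * pair b (phi p.2)) *: phi q.2
      + (pair a (phi p.1) * pair b (br p.2 q.1)) *: phi q.2)
   + \sum_(p <- r) \sum_(q <- r)
     ((pair a (phi p.1) * pair b (phi q.1)) *: br p.2 q.2).
  rewrite /contr2 /rr big_flatten /= big_allpairs_dep /= -big_split /=.
  apply: eq_bigr => p _; rewrite -big_split /=; apply: eq_bigr => q _.
  by rewrite !big_cons big_nil /= addr0 addrA.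
rewrite step1 addrC; congr (_ + _).
- rewrite exchange_big /= -sumrN; apply: eq_bigr => q _.
  rewrite /Delta_pair scaler_suml -sumrN; apply: eq_bigr => p _.
  rewrite (brs q.1 p.1) (brs q.1 p.2) !pair_oppr mulNr mulrN -opprD scaleNr opprK.
  by rewrite scalerDl.
- rewrite /rsharp (big_morph (br^~ _) (brDl _) (br0l _)).
  apply: eq_bigr => p _; rewrite brZl (big_morph (br _) (brDr _) (br0r _)).
  rewrite scaler_sumr; apply: eq_bigr => q _.
  by rewrite brZr scalerA !pair_dual.
Qed.
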